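(* Let $H$ be a Hilbert space and $U_{ik}\in B(H)$, $i,k=1,\dots,n$, operators satisfying relations (R1)–(R5). Let $P_{ik}=U_{ik}^*U_{ik}$ and, for $\sigma\in S_n$, $P_\sigma=P_{1,\sigma^{-1}(1)}P_{2,\sigma^{-1}(2)}\cdots P_{n,\sigma^{-1}(n)}$. Then the projections $P_\sigma$, $\sigma\in S_n$, are central in the C*-algebra generated by $\{U_{ik}\}$ and form a resolution of the identity: $\sum_{\sigma\in S_n}P_\sigma=1$.
   Context: $n\ge2$, $\theta\in M_n(\mathbb R)$ skew-symmetric, $\omega_{ij}=e^{2\pi i\theta_{ij}}$. Relations, for all $i,j,k,l\in\{1,\dots,n\}$: (R1) $U_{ik}U_{jl}+\omega_{ji}U_{jk}U_{il}=\omega_{kl}U_{il}U_{jk}+\omega_{ji}\omega_{kl}U_{jl}U_{ik}$; (R2) $\sum_iU_{ik}U_{il}^*=\delta_{kl}1$; (R3) $\sum_iU_{il}^*U_{ik}=\delta_{kl}1$; (R4) $U_{jk}U_{ik}^*=0$ for $i\neq j$; (R5) $U_{ik}^*U_{jk}=0$ for $i\neq j$. *)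

(* Defs.v *)
From HB Require Import structures.
From mathcomp Require Import all_boot all_order all_algebra all_fingroup.
From mathcomp Require Import reals trigo.
From mathcomp.real_closed Require Import complex.
Set Implicit Arguments. Unset Strict Implicit. Unset Printing Implicit Defensive.
Import Order.TTheory GRing.Theory Num.Theory.
Local Open Scope ring_scope.

Definition expi (R : realType) (t : R) : R[i] := Complex (cos t) (sin t).

Definition omega (R : realType) (n : nat) (theta : 'M[R]_n) (i j : 'I_n) : R[i] :=
  expi (2 * pi * theta i j).

Definition is_inner_product (R : realType) (V : lmodType R[i]) (ip : V -> V -> R[i]) :=
  [/\ forall (a : R[i]) (x y z : V), ip (a *: x + y) z = a * ip x z + ip y z,
      forall x y : V, ip y x = conjc (ip x y)
    & forall x : V, x != 0 -> 0 < ip x x].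

Definition sqnorm (R : realType) (V : lmodType R[i]) (ip : V -> V -> R[i]) (x : V) : R[i] :=
  `| ip x x |.

Definition ip_complete (R : realType) (V : lmodType R[i]) (ip : V -> V -> R[i]) :=
  forall u : nat -> V,
    (forall e : R, 0 < e -> exists N : nat, forall m k : nat,
        (N <= m)%N -> (N <= k)%N -> sqnorm ip (u m - u k) < Complex e 0) ->
    exists l : V, forall e : R, 0 < e -> exists N : nat, forall m : nat,
        (N <= m)%N -> sqnorm ip (u m - l) < Complex e 0.

Definition is_hilbert (R : realType) (V : lmodType R[i]) (ip : V -> V -> R[i]) :=
  is_inner_product ip /\ ip_complete ip.

Definition bounded_op (R : realType) (V : lmodType R[i]) (ip : V -> V -> R[i])
  (T : {linear V -> V}) :=
  exists M : R, forall x : V, sqnorm ip (T x) <= Complex (M ^+ 2) 0 * sqnorm ip x.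

Definition is_adjoint (R : realType) (V : lmodType R[i]) (ip : V -> V -> R[i])
  (T Ts : {linear V -> V}) :=
  forall x y : V, ip (T x) y = ip x (Ts y).

Definition Psigma (R : realType) (V : lmodType R[i]) (n : nat)
  (U Us : 'I_n -> 'I_n -> {linear V -> V}) (s : 'S_n) (x : V) : V :=
  foldr (fun (i : 'I_n) (y : V) => Us i (s^-1%g i) (U i (s^-1%g i) y)) x (enum 'I_n).

(* Main.v *)
Require Import Defs.
From HB Require Import structures.
From mathcomp Require Import all_boot all_order all_algebra all_fingroup.
From mathcomp Require Import reals trigo.
From mathcomp.real_closed Require Import complex.
From mathcomp Require Import lra.
From Stdlib Require Import FunctionalExtensionality ProofIrrelevance.
Import Order.TTheory GRing.Theory Num.Theory.
Local Open Scope ring_scope.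


Definition addop (V : zmodType) := {f : V -> V | forall x y, f (x + y) = f x + f y}.

Lemma addop_eq (V : zmodType) (f g : addop V) : (forall x, sval f x = sval g x) -> f = g.
Proof.
case: f g => [f hf] [g hg] /= H.
have E := functional_extensionality _ _ H; subst g.
by rewrite (proof_irrelevance _ hf hg).
Qed.

Definition aop_zero (V : zmodType) : addop V.
Proof. by exists (fun _ : V => 0) => x y; rewrite addr0. Defined.
Definition aop_add (V : zmodType) (f g : addop V) : addop V.
Proof.
exists (fun x => sval f x + sval g x) => x y.
by rewrite (svalP f) (svalP g) addrACA.
Defined.
Definition aop_comp (V : zmodType) (f g : addop V) : addop V.
Proof.
exists (fun x => sval f (sval g x)) => x y.
by rewrite (svalP g) (svalP f).
Defined.
Definition aop_id (V : zmodType) : addop V.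
Proof. by exists (fun x : V => x). Defined.

Lemma aop_f0 (V : zmodType) (f : addop V) : sval f 0 = 0.
Proof.
have h := svalP f 0 0; rewrite addr0 in h.
by apply: (@addrI _ (sval f 0)); rewrite addr0 -h.
Qed.

Lemma aop_addA V : associative (@aop_add V).
Proof. by move=> f g h; apply: addop_eq => x /=; rewrite addrA. Qed.
Lemma aop_addC V : commutative (@aop_add V).
Proof. by move=> f g; apply: addop_eq => x /=; rewrite addrC. Qed.
Lemma aop_add0 V : left_id (aop_zero V) (@aop_add V).
Proof. by move=> f; apply: addop_eq => x /=; rewrite add0r. Qed.
Lemma aop_mul0 V : left_zero (aop_zero V) (@aop_comp V).
Proof. by move=> f; apply: addop_eq => x /=. Qed.
Lemma aop_mulr0 V : right_zero (aop_zero V) (@aop_comp V).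
Proof. by move=> f; apply: addop_eq => x /=; rewrite aop_f0. Qed.
Lemma aop_Dl V : left_distributive (@aop_comp V) (@aop_add V).
Proof. by move=> f g h; apply: addop_eq => x /=. Qed.
Lemma aop_Dr V : right_distributive (@aop_comp V) (@aop_add V).
Proof. by move=> f g h; apply: addop_eq => x /=; rewrite (svalP f). Qed.

HB.instance Definition _ (V : zmodType) :=
  Monoid.isComLaw.Build (addop V) (aop_zero V) (@aop_add V) (@aop_addA V) (@aop_addC V) (@aop_add0 V).
HB.instance Definition _ (V : zmodType) :=
  Monoid.isMulLaw.Build (addop V) (aop_zero V) (@aop_comp V) (@aop_mul0 V) (@aop_mulr0 V).
HB.instance Definition _ (V : zmodType) :=
  Monoid.isAddLaw.Build (addop V) (@aop_comp V) (@aop_add V) (@aop_Dl V) (@aop_Dr V).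

Lemma aop_distr (V : zmodType) (n : nat) (F : 'I_n -> 'I_n -> addop V) :
  \big[@aop_comp V/aop_id V]_(i : 'I_n) \big[@aop_add V/aop_zero V]_(j : 'I_n) F i j
  = \big[@aop_add V/aop_zero V]_(f : {ffun 'I_n -> 'I_n}) \big[@aop_comp V/aop_id V]_i F i (f i).
Proof. exact: (@bigA_distr_bigA (addop V) (aop_zero V) (aop_id V) (@aop_comp V) (@aop_add V)). Qed.

Lemma aop_sum_eval (V : zmodType) (I : Type) (r : seq I) (F : I -> addop V) x :
  sval (\big[@aop_add V/aop_zero V]_(i <- r) F i) x = \sum_(i <- r) sval (F i) x.
Proof. elim: r => [|a r IH]; by rewrite ?big_nil ?big_cons //= IH. Qed.

Lemma aop_sum_evalP (V : zmodType) (I : Type) (r : seq I) (P : pred I) (F : I -> addop V) x :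
  sval (\big[@aop_add V/aop_zero V]_(i <- r | P i) F i) x = \sum_(i <- r | P i) sval (F i) x.
Proof. elim: r => [|a r IH]; rewrite ?big_nil ?big_cons //=; case: (P a) => //=; by rewrite IH. Qed.

Lemma aop_prod_eval (V : zmodType) (I : Type) (r : seq I) (F : I -> addop V) x :
  sval (\big[@aop_comp V/aop_id V]_(i <- r) F i) x = foldr (fun i y => sval (F i) y) x r.
Proof. elim: r => [|a r IH]; by rewrite ?big_nil ?big_cons //= IH. Qed.

Lemma foldr_comm (I W : Type) (f : I -> W -> W) (T : W -> W) r x :
  (forall a y, f a (T y) = T (f a y)) -> foldr f (T x) r = T (foldr f x r).
Proof. by move=> h; elim: r => //= a r ->; rewrite h. Qed.

Lemma foldr_rem (I : eqType) (W : Type) (f : I -> W -> W) r x j :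
  j \in r -> (forall a y, f j (f a y) = f a (f j y)) ->
  foldr f x r = f j (foldr f x (rem j r)).
Proof.
move=> + h; elim: r => //= a r IH; rewrite inE => jr.
have [<-|aj] := eqVneq a j; first by [].
rewrite /= IH; first by rewrite h.
by move: jr; rewrite eq_sym (negbTE aj).
Qed.

Lemma foldr_idem (I W : Type) (f : I -> W -> W) r x :
  (forall a y, f a (f a y) = f a y) -> (forall a b y, f a (f b y) = f b (f a y)) ->
  foldr f (foldr f x r) r = foldr f x r.
Proof.
move=> hi hc; elim: r => //= a r IH.
by rewrite (@foldr_comm _ _ f (f a)) ?hi ?IH // => b y; rewrite hc.
Qed.

Lemma foldr_sa (I W C : Type) (ipw : W -> W -> C) (f : I -> W -> W) r :
  (forall a u v, ipw (f a u) v = ipw u (f a v)) -> (forall a b y, f a (f b y) = f b (f a y)) ->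
  forall x y, ipw (foldr f x r) y = ipw x (foldr f y r).
Proof.
move=> hs hc; elim: r => //= a r IH x y.
by rewrite hs IH (@foldr_comm _ _ f (f a)) // => b z; rewrite hc.
Qed.

Lemma foldr_zero (I : eqType) (W : zmodType) (f : I -> W -> W) r x a b :
  uniq r -> a \in r -> b \in r -> a != b ->
  (forall c y, f a (f c y) = f c (f a y)) -> (forall c y, f b (f c y) = f c (f b y)) ->
  (forall y, f a (f b y) = 0) -> (forall c, f c 0 = 0) -> foldr f x r = 0.
Proof.
move=> ur ar br ab ha hb hab h0.
rewrite (@foldr_rem _ _ f r x a ar ha) (@foldr_rem _ _ f _ _ b) ?hab ?h0 //.
by rewrite mem_rem_uniq // inE eq_sym ab.
Qed.

Definition pofs (n : nat) (s : 'S_n) : {ffun 'I_n -> 'I_n} := [ffun i => (s^-1)%g i].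
Definition sofp (n : nat) (f : {ffun 'I_n -> 'I_n}) : 'S_n :=
  match injectiveP f with ReflectT inj => ((perm inj)^-1)%g | ReflectF _ => 1%g end.
Arguments pofs {n}. Arguments sofp {n}.
Lemma pofs_inj n (s : 'S_n) : injectiveb (pofs s).
Proof. by apply/injectiveP => a b; rewrite /pofs !ffunE; exact: perm_inj. Qed.
Lemma sofpK n (s : 'S_n) : sofp (pofs s) = s.
Proof.
rewrite /sofp; case: injectiveP => [inj|ninj].
  suff -> : perm inj = (s^-1)%g by rewrite invgK.
  by apply/permP => i; rewrite permE /pofs ffunE.
by exfalso; apply: ninj; apply/injectiveP; exact: pofs_inj.
Qed.
Lemma pofsK n (f : {ffun 'I_n -> 'I_n}) : injectiveb f -> pofs (sofp f) = f.
Proof.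
rewrite /sofp; case: injectiveP => // inj _.
by apply/ffunP => i; rewrite /pofs ffunE invgK permE.
Qed.
Lemma enum_index_enum (T : finType) : enum T = index_enum T.
Proof. by rewrite [index_enum T]unlock enumT. Qed.

Section Main.
Variables (R : realType) (V : lmodType R[i]) (ip : V -> V -> R[i]).
Variables (n : nat) (theta : 'M[R]_n) (U Us : 'I_n -> 'I_n -> {linear V -> V}).
Hypothesis Hip : is_inner_product ip.
Hypothesis Hth : theta^T = - theta.
Hypothesis Hadj : forall i k, is_adjoint ip (U i k) (Us i k).
Hypothesis R1 : forall i j k l (x : V),
     U i k (U j l x) + omega theta j i *: U j k (U i l x)
     = omega theta k l *: U i l (U j k x)
       + (omega theta j i * omega theta k l) *: U j l (U i k x).
Hypothesis R2 : forall k l (x : V), \sum_i U i k (Us i l x) = if k == l then x else 0.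
Hypothesis R3 : forall k l (x : V), \sum_i Us i l (U i k x) = if k == l then x else 0.
Hypothesis R4 : forall i j k (x : V), i != j -> U j k (Us i k x) = 0.
Hypothesis R5 : forall i j k (x : V), i != j -> Us i k (U j k x) = 0.

Lemma cjD (a b : R[i]) : conjc (a + b) = conjc a + conjc b.
Proof. exact: rmorphD. Qed.
Lemma cjN (a : R[i]) : conjc (- a) = - conjc a.
Proof. exact: rmorphN. Qed.
Lemma ipDl x y z : ip (x + y) z = ip x z + ip y z.
Proof. by case: Hip => H1 _ _; have := H1 1 x y z; rewrite scale1r mul1r. Qed.
Lemma ip0l z : ip 0 z = 0.
Proof. by apply: (@addrI _ (ip 0 z)); rewrite -ipDl !addr0. Qed.
Lemma ipZl a x z : ip (a *: x) z = a * ip x z.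
Proof. by case: Hip => H1 _ _; have := H1 a x 0 z; rewrite addr0 ip0l addr0. Qed.
Lemma ipC x y : ip y x = conjc (ip x y).
Proof. by case: Hip. Qed.
Lemma ipDr x y z : ip z (x + y) = ip z x + ip z y.
Proof. by rewrite ipC ipDl cjD -!ipC. Qed.
Lemma ipNl x z : ip (- x) z = - ip x z.
Proof. by rewrite -scaleN1r ipZl mulN1r. Qed.
Lemma ipNr x z : ip z (- x) = - ip z x.
Proof. by rewrite ipC ipNl cjN -ipC. Qed.
Lemma ipBl x y z : ip (x - y) z = ip x z - ip y z.
Proof. by rewrite ipDl ipNl. Qed.
Lemma ipBr x y z : ip z (x - y) = ip z x - ip z y.
Proof. by rewrite ipDr ipNr. Qed.
Lemma ip0r z : ip z 0 = 0.
Proof. by rewrite ipC ip0l conjc0. Qed.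
Lemma ip_suml (I : Type) (r : seq I) (F : I -> V) z :
  ip (\sum_(i <- r) F i) z = \sum_(i <- r) ip (F i) z.
Proof. by elim: r => [|a r IH]; rewrite ?big_nil ?big_cons ?ip0l // ipDl IH. Qed.
Lemma ip_sumr (I : Type) (r : seq I) (F : I -> V) z :
  ip z (\sum_(i <- r) F i) = \sum_(i <- r) ip z (F i).
Proof. by elim: r => [|a r IH]; rewrite ?big_nil ?big_cons ?ip0r // ipDr IH. Qed.
Lemma ip_ge0 x : 0 <= ip x x.
Proof.
case: Hip => _ _ H3; have [->|/H3 /ltW //] := eqVneq x 0.
by rewrite ip0l.
Qed.
Lemma ip_eq0 x : ip x x = 0 -> x = 0.
Proof.
case: Hip => _ _ H3 h; apply/eqP; apply: contraT => /H3; by rewrite h ltxx.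
Qed.
Lemma ip_ext u v : (forall y, ip y u = ip y v) -> u = v.
Proof.
move=> h; apply/eqP; rewrite -subr_eq0; apply/eqP/ip_eq0.
by rewrite ipBr h subrr.
Qed.
Lemma adjU i k x y : ip (U i k x) y = ip x (Us i k y).
Proof. exact: Hadj. Qed.
Lemma adjUs i k x y : ip (Us i k x) y = ip x (U i k y).
Proof. by rewrite ipC -adjU -ipC. Qed.

Lemma L1 i k x : U i k (Us i k (U i k x)) = U i k x.
Proof.
have := R2 k k (U i k x); rewrite eqxx (bigD1 i) //= big1 ?addr0 // => j ji.
by rewrite R5 // linear0.
Qed.
Lemma L1' i k x : Us i k (U i k (Us i k x)) = Us i k x.
Proof.
have h := R2 k k x; rewrite eqxx in h.
rewrite -[in RHS]h linear_sum (bigD1 i) //= big1 ?addr0 // => j ji.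
by rewrite R5 // eq_sym.
Qed.
Lemma L2a k l i x : k != l -> Us i l (U i k x) = 0.
Proof.
move=> kl; have h := R3 k l x; rewrite (negbTE kl) in h.
have h2 : U i l (Us i l (U i k x)) = 0.
  move: (congr1 (U i l) h); rewrite linear_sum linear0 (bigD1 i) //= big1 ?addr0 //.
  by move=> j ji; rewrite R4.
by rewrite -(L1' i l (U i k x)) h2 linear0.
Qed.
Lemma L2b k l i x : k != l -> U i k (Us i l x) = 0.
Proof.
move=> kl; have h := R2 k l x; rewrite (negbTE kl) in h.
have h2 : Us i k (U i k (Us i l x)) = 0.
  move: (congr1 (Us i k) h); rewrite linear_sum linear0 (bigD1 i) //= big1 ?addr0 //.
  by move=> j ji; rewrite R5 // eq_sym.
by rewrite -(L1 i k (Us i l x)) h2 linear0.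
Qed.
Lemma omega_ii i : omega theta i i = 1.
Proof.
have h : theta^T i i = (- theta) i i by rewrite Hth.
rewrite !mxE in h.
have h0 : theta i i = 0 by lra.
by rewrite /omega h0 /expi mulr0 cos0 sin0.
Qed.
Lemma L3 k l i x : k != l -> U i k (U i l x) = 0.
Proof.
move=> kl; have h := congr1 (Us i k) (R1 i i k l x).
rewrite omega_ii scale1r mul1r !linearD !linearZ /= in h.
have e : Us i k (U i l (U i k x)) = 0 by apply: L2a; rewrite eq_sym.
rewrite e scaler0 addr0 in h.
have h2 : Us i k (U i k (U i l x)) = 0.
  apply/eqP; have : (2%:R : R[i]) *: Us i k (U i k (U i l x)) == 0.
    by rewrite scaler_nat mulr2n h.
  by rewrite scaler_eq0 pnatr_eq0.
by rewrite -(L1 i k (U i l x)) h2 linear0.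
Qed.

Lemma Psa i k y z : ip (Us i k (U i k y)) z = ip y (Us i k (U i k z)).
Proof. by rewrite adjUs adjU. Qed.
Lemma Pidem i k x : Us i k (U i k (Us i k (U i k x))) = Us i k (U i k x).
Proof. by rewrite L1. Qed.
Lemma PProw i k l y : k != l -> Us i k (U i k (Us i l (U i l y))) = 0.
Proof. by move=> kl; rewrite L2b // linear0. Qed.

Definition Srow i y := \sum_k Us i k (U i k y).
Lemma SS i y : Srow i (Srow i y) = Srow i y.
Proof.
rewrite /Srow; apply: eq_bigr => k _.
rewrite !linear_sum (bigD1 k) //= big1 ?addr0 ?Pidem // => l lk.
by apply: PProw; rewrite eq_sym.
Qed.
Lemma Ssa i y z : ip (Srow i y) z = ip y (Srow i z).
Proof. by rewrite /Srow ip_suml ip_sumr; apply: eq_bigr => k _; rewrite Psa. Qed.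
Lemma Dpos i y : ip (y - Srow i y) (y - Srow i y) = ip (y - Srow i y) y.
Proof.
have e : ip (y - Srow i y) (Srow i y) = 0 by rewrite ipBl Ssa SS subrr.
by rewrite [LHS]ipBr e subr0.
Qed.
Lemma rowsum i x : \sum_k Us i k (U i k x) = x.
Proof.
have hs : \sum_(j : 'I_n) (x - Srow j x) = 0.
  rewrite sumrB /Srow exchange_big /=.
  have e : \sum_(j:'I_n) \sum_(i:'I_n) Us i j (U i j x) = \sum_(j:'I_n) x.
    by apply: eq_bigr => k _; rewrite R3 eqxx.
  by rewrite e subrr.
have h0 : \sum_(j : 'I_n) ip (x - Srow j x) (x - Srow j x) = 0.
  rewrite (eq_bigr (fun j => ip (x - Srow j x) x)); last by move=> j _; exact: Dpos.
  by rewrite -ip_suml hs ip0l.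
have := psumr_eq0P (fun j _ => ip_ge0 (x - Srow j x)) h0 (i := i) isT.
by move/ip_eq0/eqP; rewrite subr_eq0 => /eqP.
Qed.

Lemma QPQ i k x : Us i k (U i k (U i k (Us i k x))) = U i k (Us i k x).
Proof.
rewrite -[RHS](rowsum i) (bigD1 k) //= big1 ?addr0 // => l lk.
by rewrite L3 // linear0.
Qed.
Lemma PQ i k x : Us i k (U i k x) = U i k (Us i k x).
Proof.
have h := R2 k k x; rewrite eqxx in h.
rewrite -[in LHS]h !linear_sum (bigD1 i) //= big1 ?addr0 ?QPQ // => j ji.
by rewrite -QPQ R4 // linear0.
Qed.

Lemma CU i k j l x : Us i k (U i k (U j l x)) = U j l (Us i k (U i k x)).
Proof.
have [->|ji] := eqVneq j i; have [->|lk] := eqVneq l k.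
- by rewrite PQ.
- rewrite L3 ?linear0 ?L2b //. by move: lk; rewrite eq_sym.
- by rewrite PQ R5 ?R4 ?linear0 // eq_sym.
have ij : i != j by rewrite eq_sym.
have kl : k != l by rewrite eq_sym.
have hA : forall y, Us i k (U i k (U j l y))
   = (omega theta j i * omega theta k l) *: Us i k (U j l (U i k y)).
  move=> y; have h := congr1 (Us i k) (R1 i j k l y).
  rewrite !linearD !linearZ /= (R5 i j k) // (L2a l k i) // !scaler0 addr0 add0r in h.
  exact: h.
have hA' : U j l (Us i k (U i k x))
   = (omega theta i j * omega theta l k) *: U i k (U j l (Us i k x)).
  have h := R1 j i l k (Us i k x).
  rewrite (R4 i j k) // (L2b l k i) // (linear0 (U i l)) (linear0 (U j k)) !scaler0 addr0 add0r in h.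
  by rewrite PQ.
have e1 : Us i k (U i k (U j l x)) = Us i k (U i k (U j l (Us i k (U i k x)))).
  by rewrite !hA L1.
by rewrite e1 hA' !linearZ /= PQ L1.
Qed.

Lemma CUs i k j l x : Us i k (U i k (Us j l x)) = Us j l (Us i k (U i k x)).
Proof.
apply: ip_ext => y.
by rewrite -Psa -adjU -CU Psa adjU.
Qed.
Lemma Pcomm i k j l x :
  Us i k (U i k (Us j l (U j l x))) = Us j l (U j l (Us i k (U i k x))).
Proof. by rewrite CUs CU. Qed.
Lemma Pcol0 i j k x : i != j -> Us i k (U i k (Us j k (U j k x))) = 0.
Proof. by move=> ij; rewrite (R4 j i k) ?linear0 // eq_sym. Qed.

Definition Fop (i k : 'I_n) : addop V.
Proof. exists (fun y => Us i k (U i k y)) => a b; by rewrite !linearD. Defined.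

Lemma resolution x : \sum_(s : 'S_n) Psigma U Us s x = x.
Proof.
have lhs : sval (\big[@aop_comp V/aop_id V]_(i : 'I_n) \big[@aop_add V/aop_zero V]_(j : 'I_n) Fop i j) x = x.
  rewrite aop_prod_eval.
  have gen : forall r : seq 'I_n, foldr (fun i y => sval (\big[@aop_add V/aop_zero V]_(j : 'I_n) Fop i j) y) x r = x.
    by elim => //= a r ->; rewrite aop_sum_eval /Fop /=; exact: rowsum.
  exact: gen.
have rhs : sval (\big[@aop_add V/aop_zero V]_(f : {ffun 'I_n -> 'I_n}) \big[@aop_comp V/aop_id V]_i Fop i (f i)) x
   = \sum_(f : {ffun 'I_n -> 'I_n}) foldr (fun i y => Us i (f i) (U i (f i) y)) x (index_enum 'I_n).
  rewrite aop_sum_eval; apply: eq_bigr => f _; rewrite aop_prod_eval.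
  by elim: (index_enum _) => //= a r ->.
rewrite -[RHS]lhs aop_distr rhs.
rewrite (bigID (fun f : {ffun 'I_n -> 'I_n} => injectiveb f)) /=.
rewrite [X in _ = _ + X]big1 ?addr0; last first.
  move=> f /injectivePn [a [b ab fab]].
  apply: (@foldr_zero _ _ _ _ _ a b (index_enum_uniq _) (mem_index_enum a) (mem_index_enum b) ab).
  - by move=> c y; rewrite Pcomm.
  - by move=> c y; rewrite Pcomm.
  - by move=> y; rewrite fab Pcol0.
  - by move=> c; rewrite !linear0.
rewrite (reindex (@pofs n)) /=; last first.
  exists (@sofp n) => [s _|f]; first exact: sofpK.
  by rewrite inE => /pofsK.
rewrite (eq_bigl (fun _ => true)) => [|s]; last exact: pofs_inj.
apply: eq_bigr => s _; rewrite /Psigma enum_index_enum.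
by elim: (index_enum _) => //= a r ->; rewrite ffunE.
Qed.

Lemma projs (s : 'S_n) :
     (forall x, Psigma U Us s (Psigma U Us s x) = Psigma U Us s x) /\
     (forall x y, ip (Psigma U Us s x) y = ip x (Psigma U Us s y)) /\
     (forall i k (x : V), Psigma U Us s (U i k x) = U i k (Psigma U Us s x)
                       /\ Psigma U Us s (Us i k x) = Us i k (Psigma U Us s x)).
Proof.
split; [|split].
- by move=> x; apply: foldr_idem => [a y|a b y]; [rewrite Pidem | rewrite Pcomm].
- by apply: foldr_sa => [a u v|a b y]; [rewrite Psa | rewrite Pcomm].
- move=> i k x; split; apply: foldr_comm => a y; [exact: CU | exact: CUs].
Qed.
End Main.

Theorem proposition3p19 (R : realType) (V : lmodType R[i]) (ip : V -> V -> R[i])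
  (n : nat) (theta : 'M[R]_n) (U Us : 'I_n -> 'I_n -> {linear V -> V}) :
  is_hilbert ip ->
  (2 <= n)%N ->
  theta^T = - theta ->
  (forall i k, bounded_op ip (U i k)) ->
  (forall i k, is_adjoint ip (U i k) (Us i k)) ->
  (* (R1) *)
  (forall i j k l (x : V),
     U i k (U j l x) + omega theta j i *: U j k (U i l x)
     = omega theta k l *: U i l (U j k x)
       + (omega theta j i * omega theta k l) *: U j l (U i k x)) ->
  (* (R2) *)
  (forall k l (x : V), \sum_i U i k (Us i l x) = if k == l then x else 0) ->
  (* (R3) *)
  (forall k l (x : V), \sum_i Us i l (U i k x) = if k == l then x else 0) ->
  (* (R4) *)
  (forall i j k (x : V), i != j -> U j k (Us i k x) = 0) ->
  (* (R5) *)
  (forall i j k (x : V), i != j -> Us i k (U j k x) = 0) ->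
  (forall s : 'S_n,
     (* P_sigma is an orthogonal projection *)
     (forall x, Psigma U Us s (Psigma U Us s x) = Psigma U Us s x) /\
     (forall x y, ip (Psigma U Us s x) y = ip x (Psigma U Us s y)) /\
     (* P_sigma commutes with the generators U_ik and their adjoints *)
     (forall i k (x : V), Psigma U Us s (U i k x) = U i k (Psigma U Us s x)
                       /\ Psigma U Us s (Us i k x) = Us i k (Psigma U Us s x))) /\
  (* resolution of the identity *)
  (forall x : V, \sum_(s : 'S_n) Psigma U Us s x = x).
Proof.
move=> [Hip _] _ Hth _ Hadj H1 H2 H3 H4 H5; split.
- by move=> s; exact: (projs _ _ _ _ _ _ _ Hip Hth Hadj H1 H2 H3 H4 H5).
- by move=> x; exact: (resolution _ _ _ _ _ _ _ Hip Hth Hadj H1 H2 H3 H4 H5).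
Qed.
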